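(* Consider the coded caching problem with a server holding $N=2$ files $A$ and $B$, each of $F$ bits, connected through an error-free shared broadcast link to $K\ge 2$ users, each having a cache of $MF$ bits, where $M=\frac{m}{K}$ for an integer $1\le m\le K-1$. For $L\in\{1,\dots,K-1\}$ let $j^*=\left\lceil m\left(1-\frac{L}{K}\right)\right\rceil$ and $$R_K(M,L)=1+\frac{\sum_{i=\max(0,m-L+1)}^{j^*-1}\binom{K-L}{i}\binom{L-1}{m-i}+\sum_{i=j^*}^{\min(m,K-L-1)}\binom{K-L-1}{i}\binom{L}{m-i}}{\binom{K}{m}},$$ and let $R_K(M)=\max_{0<L<K}R_K(M,L)$. Then, whenever $F$ is a multiple of $\binom{K}{m}$, there exist a placement strategy (each user stores a function of $(A,B)$ of at most $MF$ bits, chosen without knowledge of the demands) and a delivery strategy such that for every demand vector $(d_1,\dots,d_K)\in\{A,B\}^K$ the server broadcasts at most $R_K(M)\,F$ bits and every user $k$ can recover the file $d_k$ from its cache contents and the broadcast. In other words, the memory–rate pair $(M,R_K(M))$ is achievable (worst case over demands).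
   Context: Coded caching setting: in a placement phase, before demands are known, each user's cache is filled with a function of the files of size at most $MF$ bits; in a delivery phase, each user $k$ requests one file $d_k\in\{A,B\}$, the server broadcasts a message (a function of the files and the demands) of at most $RF$ bits to all users, and each user must decode its requested file from the broadcast and its own cache. The pair $(M,R)$ is achievable if this is possible for all demand vectors. Binomial coefficients $\binom{a}{b}$ are $0$ when $b<0$ or $b>a$, and empty sums are $0$. *)

(* Defs.v *)
From mathcomp Require Import all_boot all_order all_algebra.
Set Implicit Arguments. Unset Strict Implicit. Unset Printing Implicit Defensive.
Import Order.TTheory GRing.Theory Num.Theory.

Definition file (F : nat) := {ffun 'I_F -> bool}.

(* Demand of a user: [false] = file A, [true] = file B. *)
Definition demand (K : nat) := 'I_K -> bool.

(* j* = ceil (m (1 - L/K)) = ceil (m (K - L) / K), for K > 0. *)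
Definition jstar (K m L : nat) : nat := (m * (K - L) + K.-1) %/ K.

Definition RKL (K m L : nat) : rat :=
  1 + ((\sum_(m.+1 - L <= i < jstar K m L) 'C(K - L, i) * 'C(L - 1, m - i)
      + \sum_(jstar K m L <= i < (minn m (K - L - 1)).+1)
            'C(K - L - 1, i) * 'C(L, m - i))%N)%:R / ('C(K, m))%:R.

(* R_K(M) = max_{0 < L < K} R_K(M, L)  (all terms are >= 1, so 0 is a
   harmless identity for the max). *)
Definition RK (K m : nat) : rat :=
  \big[Num.max/0%R]_(1 <= L < K) RKL K m L.

(* (M, R) with M = m/K achievable for file size F: placement (caches as
   functions of (A,B), of at most M F bits), delivery (broadcast as a function
   of the demands and files, of at most R F bits), and decoding of d_k by user k
   from its cache and the broadcast (the demand vector is known to users). *)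
Definition achievable (K F m : nat) (R : rat) : Prop :=
  exists (cache : 'I_K -> file F -> file F -> seq bool)
         (msg : demand K -> file F -> file F -> seq bool)
         (dec : 'I_K -> demand K -> seq bool -> seq bool -> file F),
    (forall k A B, (size (cache k A B) * K <= m * F)%N) /\
    (forall d A B, ((size (msg d A B))%:R <= R * F%:R :> rat)%R) /\
    (forall d A B k, dec k d (cache k A B) (msg d A B) = if d k then B else A).

(* Main.v *)
Require Import Defs.
From mathcomp Require Import all_boot all_order all_algebra.
From mathcomp Require Import zify ring lra.

Definition subs {K} (B : {set 'I_K}) (n : nat) : {set {set 'I_K}} :=
  [set A : {set 'I_K} | (A \subset B) && (#|A| == n)].
Definition mS K m : seq {set 'I_K} := enum (subs [set: 'I_K] m).
Definition bit {F} (A : file F) (n : nat) : bool :=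
  if insub n is Some i then A i else false.
Definition code K m s (S : {set 'I_K}) (p : nat) := index S (mS K m) * s + p.
Definition fx {K F} m s (A B : file F) (S : {set 'I_K}) p :=
  bit A (code K m s S p) (+) bit B (code K m s S p).
Definition Ysum {K} (g : {set 'I_K} -> bool) (T : {set 'I_K}) :=
  \big[addb/false]_(x in T) g (T :\ x).
Definition cacheL {K} m (k : 'I_K) : seq {set 'I_K} :=
  [seq k |: Z | Z <- enum (subs [set~ k] m.-1)].
Definition cache {K F} m s (k : 'I_K) (A B : file F) : seq bool :=
  [seq fx m s A B Z p | Z <- cacheL m k, p <- iota 0 s].
Definition DA {K} (d : demand K) : {set 'I_K} := [set x | ~~ d x].
Definition Lb {K} (d : demand K) := #|~: DA d|.
Definition thr K m (d : demand K) :=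
  if Lb d == 0 then m.+1 else if Lb d == K then 0 else jstar K m (Lb d).
Definition base {K F} m s (d : demand K) (A B : file F) : seq bool :=
  [seq (if (#|Z :&: DA d| < thr K m d)%N then bit A (code K m s Z p)
        else bit B (code K m s Z p)) | Z <- mS K m, p <- iota 0 s].
Definition lead {K} (k0 : 'I_K) (D : {set 'I_K}) := odflt k0 [pick x in D].
Definition TlB {K} m (k0 : 'I_K) (d : demand K) : seq {set 'I_K} :=
  let L := Lb d in let b0 := lead k0 (~: DA d) in
  flatten [seq [seq b0 |: (U :|: V) | U <- enum (subs (DA d) i),
                  V <- enum (subs (~: DA d :\ b0) (m - i))]
          | i <- index_iota (m.+1 - L) (jstar K m L)].
Definition TlA {K} m (k0 : 'I_K) (d : demand K) : seq {set 'I_K} :=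
  let L := Lb d in let a0 := lead k0 (DA d) in
  flatten [seq [seq a0 |: (U :|: V) | U <- enum (subs (DA d :\ a0) i),
                  V <- enum (subs (~: DA d) (m - i))]
          | i <- index_iota (jstar K m L) (minn m (K - L - 1)).+1].
Definition Tlist {K} m (k0 : 'I_K) (d : demand K) : seq {set 'I_K} :=
  if (0 < Lb d < K)%N then TlB m k0 d ++ TlA m k0 d else [::].
Definition msg {K F} m s (k0 : 'I_K) (d : demand K) (A B : file F) : seq bool :=
  base m s d A B ++ [seq Ysum (fun Z => fx m s A B Z p) T | T <- Tlist m k0 d, p <- iota 0 s].

Lemma xor_pair K (B : {set 'I_K}) (g : {set 'I_K} -> bool) :
  \big[addb/false]_(x in B) \big[addb/false]_(y in B :\ x) g (B :\ x :\ y) = false.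
Proof.
pose H x y := [&& x \in B, y \in B, (y < x)%N & g (B :\ x :\ y)].
have E : forall x, x \in B -> \big[addb/false]_(y in B :\ x) g (B :\ x :\ y)
   = \big[addb/false]_y (H x y (+) H y x).
  move=> x xB; rewrite big_mkcond; apply: eq_bigr => y _.
  rewrite /H in_setD1 xB /=.
  have sw : B :\ y :\ x = B :\ x :\ y.
    by apply/setP=> z; rewrite !in_setD1 andbCA.
  case: (ltngtP y x) => [lt|gt|eq].
  - have -> : y != x by rewrite neq_ltn lt.
    by case: (y \in B); rewrite //= addbF.
  - have -> : y != x by rewrite neq_ltn gt orbT.
    by case: (y \in B); rewrite //= sw.
  - have -> : y = x by apply: val_inj.
    by rewrite eqxx /= !andbF.
rewrite (eq_bigr (fun x => \big[addb/false]_y (H x y (+) H y x))) //.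
have -> : \big[addb/false]_(x in B) \big[addb/false]_y (H x y (+) H y x)
  = \big[addb/false]_x \big[addb/false]_y (H x y (+) H y x).
  rewrite [RHS](bigID (fun x => x \in B)) /=.
  rewrite [X in _ (+) X]big1 ?addbF // => x xB.
  by apply: big1 => y _; rewrite /H (negbTE xB) /= andbF.
rewrite (eq_bigr (fun x => \big[addb/false]_y H x y (+) \big[addb/false]_y H y x));
  last by move=> x _; rewrite big_split.
rewrite big_split /= [X in _ (+) X]exchange_big addbb //.
Qed.

Lemma allpairs_eqP (S T : eqType) (R : Type) (f g : S -> T -> R) s t :
  [seq f x y | x <- s, y <- t] = [seq g x y | x <- s, y <- t] ->
  forall x y, x \in s -> y \in t -> f x y = g x y.
Proof.
move=> E x y xs yt.
have E' : [seq (fun z => f z.1 z.2) z | z <- [seq (x, y) | x <- s, y <- t]]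
        = [seq (fun z => g z.1 z.2) z | z <- [seq (x, y) | x <- s, y <- t]].
  by rewrite !map_allpairs.
have := (iffRL (eq_in_map _ _ _) E') (x, y).
by apply; apply: allpairs_f.
Qed.

Lemma size_msg K F m s k0 (d : demand K) (A B : file F) :
  size (msg m s k0 d A B) = size (mS K m) * s + size (Tlist m k0 d) * s.
Proof. by rewrite size_cat !size_allpairs size_iota. Qed.

Lemma size_mS K m : size (mS K m) = 'C(K, m).
Proof. by rewrite /mS -cardE /subs cards_draws cardsT card_ord. Qed.

Lemma size_flat_sum (X : eqType) a b (f : nat -> seq X) :
  size (flatten [seq f i | i <- index_iota a b]) = (\sum_(a <= i < b) size (f i))%N.
Proof. by rewrite size_flatten /shape -map_comp sumnE big_map. Qed.

Lemma lead_in K (k0 : 'I_K) (D : {set 'I_K}) : (0 < #|D|)%N -> lead k0 D \in D.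
Proof.
rewrite /lead; case: pickP => [x -> //|H]; rewrite card_gt0 => /set0Pn [x xD].
by rewrite H in xD.
Qed.

Lemma card_DA K (d : demand K) : #|DA d| = K - Lb d.
Proof. have := cardsC (DA d); rewrite card_ord /Lb; lia. Qed.

Lemma card_subs_enum K (B : {set 'I_K}) n : size (enum (subs B n)) = 'C(#|B|, n).
Proof. by rewrite -cardE /subs cards_draws. Qed.

Lemma size_Tlist K m k0 (d : demand K) : (0 < Lb d < K)%N ->
  size (Tlist m k0 d) =
   (\sum_(m.+1 - Lb d <= i < jstar K m (Lb d)) 'C(K - Lb d, i) * 'C(Lb d - 1, m - i)
      + \sum_(jstar K m (Lb d) <= i < (minn m (K - Lb d - 1)).+1)
            'C(K - Lb d - 1, i) * 'C(Lb d, m - i))%N.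
Proof.
move=> /andP [L0 LK]; rewrite /Tlist L0 LK size_cat /TlB /TlA !size_flat_sum.
have b0in : lead k0 (~: DA d) \in ~: DA d by apply: lead_in.
have a0in : lead k0 (DA d) \in DA d by apply: lead_in; rewrite card_DA subn_gt0.
congr (_ + _); apply: eq_bigr => i _; rewrite size_allpairs !card_subs_enum.
  rewrite card_DA; congr (_ * _); have := cardsD1 (lead k0 (~: DA d)) (~: DA d).
  by rewrite b0in /Lb => ->; rewrite add1n subn1.
congr (_ * _); have := cardsD1 (lead k0 (DA d)) (DA d).
rewrite a0in card_DA add1n => H.
by rewrite H subn1.
Qed.

Lemma code_surj K m s (i : nat) : (i < 'C(K, m) * s)%N ->
  exists Z : {set 'I_K}, exists p, [/\ #|Z| = m, (p < s)%N & code K m s Z p = i].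
Proof.
move=> Hi.
have s0 : (0 < s)%N by case: s Hi => //; rewrite muln0.
have Hq : (i %/ s < 'C(K, m))%N by rewrite ltn_divLR.
exists (nth set0 (mS K m) (i %/ s)), (i %% s); split.
- have : nth set0 (mS K m) (i %/ s) \in mS K m by apply: mem_nth; rewrite size_mS.
  by rewrite /mS mem_enum inE => /andP [_ /eqP].
- by rewrite ltn_mod.
- by rewrite /code index_uniq ?size_mS ?enum_uniq // -divn_eq.
Qed.

Lemma xx_aux : True. Proof. done. Qed.
Lemma Y_extend K (g1 g2 : {set 'I_K} -> bool) (a0 : 'I_K) (T : {set 'I_K}) : a0 \notin T ->
  (forall x, x \in T -> Ysum g1 ((a0 |: T) :\ x) = Ysum g2 ((a0 |: T) :\ x)) ->
  Ysum g1 T = Ysum g2 T.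
Proof.
move=> a0T H.
have I1 := xor_pair _ (a0 |: T) g1; have I2 := xor_pair _ (a0 |: T) g2.
rewrite (big_setD1 a0) ?setU11 // setU1K // in I1.
rewrite (big_setD1 a0) ?setU11 // setU1K // in I2.
rewrite (eq_bigr (fun x => Ysum g2 ((a0 |: T) :\ x))) in I1; last first.
  by move=> x xT; exact: H.
move: I1 I2; rewrite /Ysum /=.
have xx : forall a b r : bool, a (+) r = false -> b (+) r = false -> a = b
  by case; case; case.
exact: xx.
Qed.

Lemma memTA K m k0 (d : demand K) (T : {set 'I_K}) :
  (0 < Lb d < K)%N -> #|T| = m.+1 -> lead k0 (DA d) \in T ->
  (jstar K m (Lb d) < #|T :&: DA d|)%N -> T \in Tlist m k0 d.
Proof.
move=> HL HT a0T Hj; have /andP [L0 LK] := HL.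
have a0in : lead k0 (DA d) \in DA d by apply: lead_in; rewrite card_DA subn_gt0.
rewrite /Tlist HL mem_cat; apply/orP; right; rewrite /TlA.
move: a0T a0in; set a0 := lead k0 (DA d) => a0T a0in.
set U := T :&: DA d :\ a0; set V := T :&: ~: DA d.
have HTU : T = a0 |: (U :|: V).
  apply/setP => x; rewrite !inE; case: (x =P a0) => [->|_] //=.
  by case: (x \in T); case: (d x).
have c1 : #|T :&: DA d| = (#|U|).+1.
  by rewrite (cardsD1 a0) inE a0T a0in.
have c2 : #|T :&: DA d| + #|V| = #|T| by rewrite -(cardsID (DA d) T) setDE.
have c3 : (#|U| <= #|DA d :\ a0|)%N by apply: subset_leq_card; apply: setSD; apply: subsetIr.
have c4 : #|DA d :\ a0| = K - Lb d - 1.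
  by have := cardsD1 a0 (DA d); rewrite a0in card_DA add1n => ->; rewrite subn1.
have [Hi1 Hi2 Hi3] : [/\ (jstar K m (Lb d) <= #|U|)%N, (#|U| <= minn m (K - Lb d - 1))%N
    & #|V| = m - #|U|].
  move: c1 c2 c3 c4 Hj; rewrite HT.
  move: #|T :&: DA d| #|U| #|V| #|DA d :\ a0| => nT nU nV nD c1 c2 c3 c4 Hj.
  rewrite leq_min; split; try lia; apply/andP; split; lia.
apply/flatten_mapP; exists #|U|.
  by rewrite mem_index_iota Hi1 ltnS Hi2.
rewrite {1}HTU; apply: allpairs_f; rewrite mem_enum inE.
  by rewrite eqxx andbT; apply: setSD; apply: subsetIr.
by rewrite Hi3 eqxx andbT; apply: subsetIr.
Qed.

Lemma memTB K m k0 (d : demand K) (T : {set 'I_K}) :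
  (0 < Lb d < K)%N -> #|T| = m.+1 -> lead k0 (~: DA d) \in T ->
  (#|T :&: DA d| < jstar K m (Lb d))%N -> T \in Tlist m k0 d.
Proof.
move=> HL HT b0T Hj; have /andP [L0 LK] := HL.
have b0in : lead k0 (~: DA d) \in ~: DA d by apply: lead_in.
rewrite /Tlist HL mem_cat; apply/orP; left; rewrite /TlB.
move: b0T b0in; set b0 := lead k0 (~: DA d) => b0T b0in.
set U := T :&: DA d; set V := T :&: ~: DA d :\ b0.
have HTU : T = b0 |: (U :|: V).
  apply/setP => x; rewrite !inE; case: (x =P b0) => [->|_] //=.
  by case: (x \in T); case: (d x).
have c1 : #|T :&: ~: DA d| = (#|V|).+1.
  by rewrite (cardsD1 b0) inE b0T b0in.
have c2 : #|U| + #|T :&: ~: DA d| = #|T| by rewrite -(cardsID (DA d) T) setDE.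
have c3 : (#|V| <= #|~: DA d :\ b0|)%N by apply: subset_leq_card; apply: setSD; apply: subsetIr.
have c4 : #|~: DA d :\ b0| = Lb d - 1.
  by have := cardsD1 b0 (~: DA d); rewrite b0in /Lb add1n => ->; rewrite subn1.
have [Hi1 Hi2 Hi3] : [/\ (m.+1 - Lb d <= #|U|)%N, (#|U| < jstar K m (Lb d))%N
    & #|V| = m - #|U|].
  move: c1 c2 c3 c4 Hj L0; rewrite HT.
  move: #|T :&: ~: DA d| #|U| #|V| #|~: DA d :\ b0| (Lb d) => nT nU nV nD L c1 c2 c3 c4 Hj L0.
  split; lia.
apply/flatten_mapP; exists #|U|.
  by rewrite mem_index_iota Hi1 Hi2.
rewrite {1}HTU; apply: allpairs_f; rewrite mem_enum inE.
  by rewrite eqxx andbT; apply: subsetIr.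
by rewrite Hi3 eqxx andbT; apply: setSD; apply: subsetIr.
Qed.


Lemma bitE F (X : file F) (i : 'I_F) : bit X i = X i.
Proof. by rewrite /bit valK. Qed.

Lemma Ysum_U1 K (g1 g2 : {set 'I_K} -> bool) (k : 'I_K) (Z : {set 'I_K}) : k \notin Z ->
  (forall x, x \in Z -> g1 ((k |: Z) :\ x) = g2 ((k |: Z) :\ x)) ->
  Ysum g1 (k |: Z) = Ysum g2 (k |: Z) -> g1 Z = g2 Z.
Proof.
move=> kZ H; rewrite /Ysum.
rewrite [X in X = _ -> _](big_setD1 k) ?setU11 //.
rewrite [X in _ = X -> _](big_setD1 k) ?setU11 // setU1K //.
rewrite (eq_bigr (fun x => g2 ((k |: Z) :\ x))) //.
have xx : forall a b r : bool, a (+) r = b (+) r -> a = b by case; case; case.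
exact: xx.
Qed.

Lemma card_del K (a0 x : 'I_K) (T : {set 'I_K}) n : a0 \notin T -> x \in T -> #|T| = n.+1 ->
  #|(a0 |: T) :\ x| = n.+1.
Proof.
move=> a0T xT HT; have := cardsD1 x (a0 |: T).
rewrite inE xT orbT cardsU1 a0T HT /= add1n => /eqP; rewrite eqSS => /eqP <- //.
Qed.

Lemma mem_del K (a0 x : 'I_K) (T : {set 'I_K}) : a0 \notin T -> x \in T -> a0 \in (a0 |: T) :\ x.
Proof.
move=> a0T xT; rewrite !inE eqxx andbT; apply/eqP => e; by rewrite e xT in a0T.
Qed.

Lemma decode K m s k0 (k : 'I_K) (d : demand K) F (A B A' B' : file F) :
  F = 'C(K, m) * s ->
  cache m s k A B = cache m s k A' B' -> msg m s k0 d A B = msg m s k0 d A' B' ->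
  (if d k then B else A) = (if d k then B' else A').
Proof.
move=> HF Hc0 Hm0.
have Hc : forall (Z : {set 'I_K}) p, k \in Z -> #|Z| = m -> (p < s)%N ->
    fx m s A B Z p = fx m s A' B' Z p.
  move=> Z p kZ cZ ps; move: Hc0; rewrite /cache => Hc0.
  apply: (allpairs_eqP _ _ _ _ _ _ _ Hc0); last by rewrite mem_iota.
  rewrite /cacheL -(setD1K kZ); apply: map_f.
  rewrite mem_enum inE; apply/andP; split.
    by apply/subsetP => x; rewrite !inE => /andP [].
  by have := cardsD1 k Z; rewrite kZ cZ add1n => ->.
move: Hm0; rewrite /msg => /eqP; rewrite eqseq_cat; last by rewrite /base !size_allpairs.
move=> /andP [/eqP Hb0 /eqP Ht0].
have Hb : forall (Z : {set 'I_K}) p, #|Z| = m -> (p < s)%N ->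
   (if (#|Z :&: DA d| < thr K m d)%N then bit A (code K m s Z p)
        else bit B (code K m s Z p)) =
   (if (#|Z :&: DA d| < thr K m d)%N then bit A' (code K m s Z p)
        else bit B' (code K m s Z p)).
  move=> Z p cZ ps; move: Hb0; rewrite /base => Hb0.
  apply: (allpairs_eqP _ _ _ _ _ _ _ Hb0); last by rewrite mem_iota.
  by rewrite /mS mem_enum inE subsetT cZ eqxx.
have Ht : forall (T : {set 'I_K}) p, T \in Tlist m k0 d -> (p < s)%N ->
   Ysum (fun Z => fx m s A B Z p) T = Ysum (fun Z => fx m s A' B' Z p) T.
  move=> T p HT ps.
  by apply: (allpairs_eqP _ _ _ _ _ _ _ Ht0); rewrite ?mem_iota.
have aT : forall (T : {set 'I_K}), (#|T :&: DA d| <= #|T|)%N.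
  by move=> T; apply: subset_leq_card; apply: subsetIl.
have YA : forall (T : {set 'I_K}) p, (p < s)%N -> #|T| = m.+1 ->
    (thr K m d < #|T :&: DA d|)%N -> k \in DA d ->
    Ysum (fun Z => fx m s A B Z p) T = Ysum (fun Z => fx m s A' B' Z p) T.
  move=> T p ps HT Hth kD.
  have LK : (Lb d < K)%N.
    have : (0 < #|DA d|)%N by apply/card_gt0P; exists k.
    rewrite card_DA; lia.
  have L0 : (0 < Lb d)%N.
    move: Hth; rewrite /thr; case: eqP => [_|/eqP]; last by lia.
    have := aT T; rewrite HT; lia.
  have Hj : (jstar K m (Lb d) < #|T :&: DA d|)%N.
    move: Hth; rewrite /thr; case: eqP => [|_]; first by lia.
    case: eqP => [|_ //]; lia.
  have HL : (0 < Lb d < K)%N by rewrite L0 LK.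
  have a0in : lead k0 (DA d) \in DA d by apply: lead_in; apply/card_gt0P; exists k.
  case a0T : (lead k0 (DA d) \in T).
    by apply: Ht => //; apply: memTA.
  apply: (Y_extend _ _ _ (lead k0 (DA d))); first by rewrite a0T.
  move=> x xT; apply: Ht => //; apply: memTA => //.
  - by apply: card_del => //; rewrite a0T.
  - by apply: mem_del => //; rewrite a0T.
  apply: (leq_trans Hj).
  have e1 : #|T :&: DA d| = (x \in T :&: DA d) + #|T :&: DA d :\ x| by apply: cardsD1.
  have e2 : (#|T :&: DA d :\ x|.+1 <= #|((lead k0 (DA d) |: T) :\ x) :&: DA d|)%N.
    have sub : lead k0 (DA d) |: (T :&: DA d :\ x) \subset ((lead k0 (DA d) |: T) :\ x) :&: DA d.
      apply/subsetP => y; rewrite !inE; case: (y =P lead k0 (DA d)) => [->|_] /=.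
        have := mem_del _ (lead k0 (DA d)) x T; rewrite a0T xT !inE => /(_ isT isT).
        by move=> /andP [-> _]; move: a0in; rewrite inE.
      by move=> /andP [-> /andP [-> ->]].
    have := subset_leq_card sub; rewrite cardsU1 !inE a0T /= andbF add1n //.
  by move: e1 e2; case: (x \in T :&: DA d) => /= ->; rewrite ?add1n ?add0n // => /ltnW.
have YB : forall (T : {set 'I_K}) p, (p < s)%N -> #|T| = m.+1 ->
    (#|T :&: DA d| < thr K m d)%N -> k \in ~: DA d ->
    Ysum (fun Z => fx m s A B Z p) T = Ysum (fun Z => fx m s A' B' Z p) T.
  move=> T p ps HT Hth kD.
  have L0 : (0 < Lb d)%N by apply/card_gt0P; exists k.
  have LK0 : (Lb d <= K)%N by have := max_card (~: DA d); rewrite card_ord.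
  have [LK Hj] : (Lb d < K)%N /\ (#|T :&: DA d| < jstar K m (Lb d))%N.
    move: Hth; rewrite /thr; case: eqP => [|_]; first by lia.
    case: eqP => [|/eqP LK1 //]; first by lia.
    move=> Hj; split => //; rewrite ltn_neqAle LK1 LK0 //.
  have HL : (0 < Lb d < K)%N by rewrite L0 LK.
  have b0in : lead k0 (~: DA d) \in ~: DA d by apply: lead_in.
  case b0T : (lead k0 (~: DA d) \in T).
    by apply: Ht => //; apply: memTB.
  apply: (Y_extend _ _ _ (lead k0 (~: DA d))); first by rewrite b0T.
  move=> x xT; apply: Ht => //; apply: memTB => //.
  - by apply: card_del => //; rewrite b0T.
  - by apply: mem_del => //; rewrite b0T.
  apply: (leq_ltn_trans _ Hj); apply: subset_leq_card.
  apply/subsetP => y; rewrite !inE; case: (y =P lead k0 (~: DA d)) => [->|_] /=.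
    by move: b0in; rewrite !inE negbK => ->; rewrite andbF.
  by move=> /andP [/andP [_ ->] ->].
have xorL : forall c a b a' b' : bool, (if c then a else b) = (if c then a' else b') ->
    a (+) b = a' (+) b' -> a = a' /\ b = b'.
  by case; case; case; case; case.
have xcancel : forall a b b' : bool, a (+) b = a (+) b' -> b = b'.
  by case; case; case.
have key : forall (i : 'I_F), exists Z : {set 'I_K}, exists p,
   [/\ #|Z| = m, (p < s)%N & (forall X : file F, X i = bit X (code K m s Z p))].
  move=> i; have Hi0 : (nat_of_ord i < 'C(K, m) * s)%N by rewrite -HF ltn_ord.
  have [Z [p [cZ ps Hi]]] := code_surj K m s i Hi0.
  by exists Z, p; split => // X; rewrite -bitE Hi.
case dk : (d k); apply/ffunP => i; have [Z [p [cZ ps Hi]]] := key i; rewrite !Hi;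
  have hb := Hb Z p cZ ps.
- case kZ : (k \in Z).
    have hc := Hc Z p kZ cZ ps; rewrite /fx in hc.
    by have [] := xorL _ _ _ _ _ hb hc.
  case: ltnP hb => Hth hb; last by [].
  have kD : k \in ~: DA d by rewrite !inE dk.
  have HT : #|k |: Z| = m.+1 by rewrite cardsU1 kZ cZ.
  have hs : forall x, x \in Z -> fx m s A B ((k |: Z) :\ x) p = fx m s A' B' ((k |: Z) :\ x) p.
    move=> x xZ; apply: Hc => //; first by apply: mem_del => //; rewrite kZ.
    have m0 : (0 < m)%N by rewrite -cZ; apply/card_gt0P; exists x.
    by rewrite (card_del _ _ _ _ (m.-1)) ?kZ // prednK.
  have hY := YB (k |: Z) p ps HT.
  have hf := Ysum_U1 _ _ _ _ _ (negbT kZ) hs (hY (leq_ltn_trans _ Hth) kD).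
  have H1 : (#|(k |: Z) :&: DA d| <= #|Z :&: DA d|)%N.
    apply: subset_leq_card; apply/subsetP => y; rewrite !inE.
    by case: (y =P k) => [->|_] /=; [rewrite dk andbF | ].
  move: (hf H1); rewrite /fx hb; exact: xcancel.
- case kZ : (k \in Z).
    have hc := Hc Z p kZ cZ ps; rewrite /fx in hc.
    by have [] := xorL _ _ _ _ _ hb hc.
  case: ltnP hb => Hth hb; first by [].
  have kD : k \in DA d by rewrite !inE dk.
  have HT : #|k |: Z| = m.+1 by rewrite cardsU1 kZ cZ.
  have hs : forall x, x \in Z -> fx m s A B ((k |: Z) :\ x) p = fx m s A' B' ((k |: Z) :\ x) p.
    move=> x xZ; apply: Hc => //; first by apply: mem_del => //; rewrite kZ.
    have m0 : (0 < m)%N by rewrite -cZ; apply/card_gt0P; exists x.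
    by rewrite (card_del _ _ _ _ (m.-1)) ?kZ // prednK.
  have hY := YA (k |: Z) p ps HT.
  have hf := Ysum_U1 _ _ _ _ _ (negbT kZ) hs (hY (leq_ltn_trans Hth _) kD).
  have H1 : (#|Z :&: DA d| < #|(k |: Z) :&: DA d|)%N.
    have sub : k |: (Z :&: DA d) \subset (k |: Z) :&: DA d.
      apply/subsetP => y; rewrite !inE.
      by case: (y =P k) => [->|_] /=; [rewrite dk | ].
    by have := subset_leq_card sub; rewrite cardsU1 inE kZ.
  move: (hf H1); rewrite /fx hb; rewrite ![_ (+) bit B' _]addbC; exact: xcancel.
Qed.

Import Order.TTheory GRing.Theory Num.Theory.

Lemma RKL_ge1 K m L : (1 <= RKL K m L)%R.
Proof. by rewrite /RKL lerDl divr_ge0 ?ler0n. Qed.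

Lemma RKL_le_RK K m L : (1 <= L < K)%N -> (RKL K m L <= RK K m)%R.
Proof.
move=> HL; rewrite /RK.
by apply: (Order.TotalTheory.bigmax_sup_seq _ L) => //; rewrite mem_index_iota.
Qed.

Lemma RK_ge1 K m : (2 <= K)%N -> (1 <= RK K m)%R.
Proof. by move=> HK; apply: (le_trans (RKL_ge1 K m 1)); apply: RKL_le_RK; rewrite HK. Qed.

Lemma RKL_mul K m L s : (m <= K)%N ->
  (RKL K m L * ('C(K, m) * s)%:R =
   ('C(K, m) * s + (\sum_(m.+1 - L <= i < jstar K m L) 'C(K - L, i) * 'C(L - 1, m - i)
      + \sum_(jstar K m L <= i < (minn m (K - L - 1)).+1)
            'C(K - L - 1, i) * 'C(L, m - i)) * s)%:R)%R.
Proof.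
move=> mK; rewrite /RKL.
have C0 : ('C(K, m)%:R != 0 :> rat)%R by rewrite pnatr_eq0 -lt0n bin_gt0.
move: C0; set C := 'C(K, m); set E := (_ + _)%N => C0.
rewrite natrD !natrM; field; exact: C0.
Qed.

Theorem mainTheorem1 (K m F : nat) :
  (2 <= K)%N -> (1 <= m)%N -> (m <= K - 1)%N -> ('C(K, m) %| F)%N ->
  achievable K F m (RK K m).
Proof.
move=> HK Hm1 HmK Hdiv.
set s := F %/ 'C(K, m).
have HF : F = 'C(K, m) * s by rewrite /s mulnC divnK.
have K0 : (0 < K)%N by lia.
pose k0 : 'I_K := Ordinal K0.
exists (fun k A B => cache m s k A B), (fun d A B => msg m s k0 d A B).
exists (fun k d c M => match [pick AB : file F * file F |
          (cache m s k AB.1 AB.2 == c) && (msg m s k0 d AB.1 AB.2 == M)] with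
          | Some AB => if d k then AB.2 else AB.1 | None => [ffun=> false] end).
split; [|split].
- move=> k A B; rewrite /cache size_allpairs size_iota /cacheL size_map card_subs_enum.
  rewrite cardsC1 card_ord HF.
  have E : K * 'C(K.-1, m.-1) = m * 'C(K, m).
    by rewrite mul_bin_diag prednK.
  rewrite mulnAC (mulnC _ K) E mulnA //.
- move=> d A B; rewrite size_msg size_mS.
  have mK : (m <= K)%N by lia.
  case HL : (0 < Lb d < K)%N.
    rewrite size_Tlist // -(RKL_mul _ _ _ _ mK) HF.
    apply: ler_wpM2r; first by rewrite ler0n.
    by apply: RKL_le_RK; move: HL => /andP [? ?]; apply/andP; split.
  rewrite /Tlist HL /= mul0n addn0 HF -[X in (X <= _)%R]mul1r.
  by apply: ler_wpM2r; [rewrite ler0n | apply: RK_ge1].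
- move=> d A B k /=.
  case: pickP => [[A' B'] /= /andP [/eqP Hc /eqP Hm] | H].
    by apply: (decode _ _ _ k0 k d F A' B' A B HF Hc Hm).
  by have := H (A, B); rewrite /= !eqxx.
Qed.
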